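(* Consider a GNEP with $N$ players in which player $\nu$ solves $$\min_{x^\nu}\theta_\nu(x)\quad\text{s.t.}\quad g(x)\le0,\ h^\nu(x^\nu)\le0,$$ where $g:\mathbb{R}^n\to\mathbb{R}^m$ and $h^\nu:\mathbb{R}^{n_\nu}\to\mathbb{R}^{p_\nu}$ are continuously differentiable with convex components, and assume that this GNEP has feasible points (points $x$ with $g(x)\le0$ and $h^\nu(x^\nu)\le0$ for all $\nu$). If $\bar x$ is a KKT point of the corresponding Feasibility GNEP, then $g(\bar x)\le0$, i.e. $\bar x$ is feasible for the GNEP.
   Context: Variables: $x=(x^1,\ldots,x^N)\in\mathbb{R}^n$, $x^\nu\in\mathbb{R}^{n_\nu}$. $v_+=\max\{0,v\}$ componentwise; $\nabla_{x^\nu}$ is the partial (transposed) Jacobian w.r.t. $x^\nu$; $\min$ componentwise. The corresponding Feasibility GNEP: player $\nu$ solves $\min_{x^\nu}\|g_+(x)\|^2$ s.t. $h^\nu(x^\nu)\le0$. $\bar x$ is a KKT point of it if for every $\nu$ there is $w^\nu\in\mathbb{R}^{p_\nu}$ with $\nabla_{x^\nu}\|g_+(\bar x)\|^2+\nabla h^\nu(\bar x^\nu)w^\nu=0$ and $\min\{-h^\nu(\bar x^\nu),w^\nu\}=0$. *)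

(* Defs.v *)
From HB Require Import structures.
From mathcomp Require Import all_boot all_order all_algebra.
From mathcomp Require Import all_classical all_reals all_analysis.
Set Implicit Arguments. Unset Strict Implicit. Unset Printing Implicit Defensive.
Import Order.TTheory GRing.Theory Num.Theory.
Import numFieldNormedType.Exports.
Local Open Scope ring_scope.

(* Vectors of R^k are column vectors 'cV[R]_k; a point of R^n with
   n = n_1 + ... + n_N is x : 'cV[R]_(\sum_nu n_ nu), and the block of
   player nu is x^nu := submxcol x nu : 'cV[R]_(n_ nu). *)

Section Defs.
Variable R : realType.

Definition blk (N : nat) (n_ : 'I_N -> nat) (x : 'cV[R]_(\sum_(nu < N) n_ nu)) (nu : 'I_N)
  : 'cV[R]_(n_ nu) := submxcol x nu.

Definition convex_fun (k : nat) (f : 'cV[R]_k -> R) :=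
  forall (x y : 'cV[R]_k) (t : R), 0 <= t <= 1 ->
    f (t *: x + (1 - t) *: y) <= t * f x + (1 - t) * f y.

Definition convex_components (k m : nat) (g : 'cV[R]_k -> 'cV[R]_m) :=
  forall i : 'I_m, convex_fun (fun x => g x i ord0).

Definition C1 (k m : nat) (g : 'cV[R]_k -> 'cV[R]_m) :=
  (forall x, differentiable g x) /\
  (forall i : 'I_k, continuous (fun x => 'd g x (delta_mx i ord0))).

Definition grad (k : nat) (f : 'cV[R]_k -> R) (x : 'cV[R]_k) : 'cV[R]_k :=
  \col_i ('d f x (delta_mx i ord0)).

(* transposed Jacobian  \nabla h(x) = [\nabla h_1(x) ... \nabla h_p(x)] *)
Definition tjac (k p : nat) (h : 'cV[R]_k -> 'cV[R]_p) (x : 'cV[R]_k) : 'M[R]_(k, p) :=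
  \matrix_(i, j) ('d (fun y => h y j ord0) x (delta_mx i ord0)).

Definition vplus (m : nat) (v : 'cV[R]_m) : 'cV[R]_m := \col_i Num.max 0 (v i ord0).

Definition sqnorm (m : nat) (v : 'cV[R]_m) : R := \sum_i (v i ord0) ^+ 2.

Definition compl0 (p : nat) (a b : 'cV[R]_p) :=
  forall j : 'I_p, Num.min (a j ord0) (b j ord0) = 0.

Definition gnep_feasible (N : nat) (n_ p_ : 'I_N -> nat) (m : nat)
  (g : 'cV[R]_(\sum_(nu < N) n_ nu) -> 'cV[R]_m)
  (h : forall nu : 'I_N, 'cV[R]_(n_ nu) -> 'cV[R]_(p_ nu))
  (x : 'cV[R]_(\sum_(nu < N) n_ nu)) :=
  (forall i, g x i ord0 <= 0) /\ (forall nu j, h nu (blk x nu) j ord0 <= 0).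

(* KKT point of the Feasibility GNEP: player nu solves
   min_{x^nu} ||g_+(x)||^2  s.t.  h^nu(x^nu) <= 0 *)
Definition feas_kkt (N : nat) (n_ p_ : 'I_N -> nat) (m : nat)
  (g : 'cV[R]_(\sum_(nu < N) n_ nu) -> 'cV[R]_m)
  (h : forall nu : 'I_N, 'cV[R]_(n_ nu) -> 'cV[R]_(p_ nu))
  (xb : 'cV[R]_(\sum_(nu < N) n_ nu)) :=
  forall nu : 'I_N, exists w : 'cV[R]_(p_ nu),
    blk (grad (fun x => sqnorm (vplus (g x))) xb) nu
      + tjac (h nu) (blk xb nu) *m w = 0
    /\ compl0 (- h nu (blk xb nu)) w.

End Defs.

(* Main.v *)
Require Import Defs.
From HB Require Import structures.
From mathcomp Require Import all_boot all_order all_algebra.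
From mathcomp Require Import all_classical all_reals all_analysis.
From mathcomp Require Import ring lra.
Import Order.TTheory GRing.Theory Num.Theory.
Import numFieldNormedType.Exports.
Local Open Scope ring_scope.
Local Open Scope classical_set_scope.
Lemma cvx_diff_le (R : realType) k (f : 'cV[R]_k -> R) x y :
  convex_fun f -> differentiable f x -> 'd f x (y - x) <= f y - f x.
Proof.
move=> cf df; rewrite -deriveE //.
have := @diff_derivable _ _ _ f x (y - x) df.
rewrite /derivable /derive => cv.
have sub : ((0:R)^'+ : set_system R) `=>` (0:R)^'.
  move=> A /= [e /= e0 H]; exists e => //= z zd zpos; apply: H => //.
  by rewrite gt_eqF.
have cvr := cvg_trans (cvg_app _ sub) cv.
rewrite -(cvg_lim _ cvr) //.
apply: limr_le; first by apply/cvg_ex; eexists; exact: cvr.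
near=> t.
have t0 : 0 < t by near: t; exact: nbhs_right_gt.
have t1 : t < 1 by near: t; exact: nbhs_right_lt.
rewrite /= /shift.
have e : t *: (y - x) + x = t *: y + (1 - t) *: x.
  by rewrite scalerBr scalerBl scale1r addrA addrAC.
rewrite e.
have := cf y x t; rewrite (ltW t0) (ltW t1) /= => /(_ isT) H.
rewrite ler_pdivrMl // -subr_ge0.
have -> : t * (f y - f x) - (f (t *: y + (1 - t) *: x) - f x)
  = t * f y + (1 - t) * f x - f (t *: y + (1 - t) *: x) by ring.
by rewrite subr_ge0.
Unshelve. all: by end_near.
Qed.
Lemma sq_bound (R : realType) (t h : R) :
  `|Num.max 0 (h + t) ^+ 2 - Num.max 0 t ^+ 2 - 2 * Num.max 0 t * h| <= 2 * h ^+ 2.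
Proof.
rewrite ler_norml.
have [t0|t0] := leP 0 t; have [ht0|ht0] := leP 0 (h + t).
- apply/andP; split; nra.
- apply/andP; split; nra.
- apply/andP; split; nra.
- apply/andP; split; nra.
Qed.

Lemma s_diff (R : realType) (t : R) :
  differentiable (fun u : R => Num.max 0 u ^+ 2) t.
Proof.
apply/derivable1_diffP; rewrite /derivable.
apply/cvg_ex; exists (2 * Num.max 0 t); apply/cvgrPdist_lt => e e0.
near=> h.
have h0 : h != 0 by near: h; exact: nbhs_dnbhs_neq.
have he : `|h| < e / 2 by near: h; apply: dnbhs0_lt; rewrite divr_gt0.
rewrite /= /shift [_ *: 1]mulr1 [_ *: _]/(_ * _).
have := @sq_bound R t h.
set A := Num.max 0 (h + t) ^+ 2 - Num.max 0 t ^+ 2.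
set b := Num.max 0 t.
move=> Hb.
have -> : 2 * b - h^-1 * A = - (h^-1 * (A - 2 * b * h)).
  by field.
rewrite normrN normrM normrV ?unitfE //.
rewrite ltr_pdivrMl ?normr_gt0 //.
apply: (le_lt_trans Hb).
have hp : 0 < `|h| by rewrite normr_gt0.
rewrite -[h ^+ 2]real_normK ?num_real //.
nra.
Unshelve. all: by end_near.
Qed.

Lemma d_lin (R : realType) k (f : 'cV[R]_k -> R) x (d : 'cV[R]_k) :
  'd f x d = \sum_i d i ord0 * 'd f x (delta_mx i ord0).
Proof.
have {1}-> : d = \sum_i d i ord0 *: delta_mx i ord0.
  rewrite {1}[d]matrix_sum_delta; apply: eq_bigr => i _.
  by rewrite big_ord1.
rewrite linear_sum; apply: eq_bigr => i _.
by rewrite linearZ.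
Qed.

Lemma blk_dot (R : realType) N (n_ : 'I_N -> nat)
  (u v : 'cV[R]_(\sum_(nu < N) n_ nu)) :
  \sum_k u k ord0 * v k ord0 =
  \sum_nu \sum_i (blk u nu) i ord0 * (blk v nu) i ord0.
Proof.
have E : u^T *m v = \sum_nu (blk u nu)^T *m blk v nu.
  rewrite -{1}[u]submxcolK -{1}[v]submxcolK tr_mxcol mul_mxrow_mxcol.
  by [].
have := congr1 (fun M : 'M[R]_1 => M ord0 ord0) E.
rewrite /= summxE => E2.
transitivity ((u^T *m v) ord0 ord0).
  by rewrite mxE; apply: eq_bigr => k _; rewrite mxE.
rewrite E2.
apply: eq_bigr => nu _; rewrite !mxE; apply: eq_bigr => i _.
by rewrite !mxE.
Qed.

Lemma min0 (R : realType) (a b : R) : Num.min a b = 0 -> 0 <= b /\ a * b = 0.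
Proof.
have [ab|ab] := leP a b => e.
  by subst a; split => //; rewrite mul0r.
by subst b; split => //; rewrite mulr0.
Qed.

Lemma s_cvx (R : realType) (a a1 b1 t : R) : 0 <= t <= 1 ->
  a <= t * a1 + (1 - t) * b1 ->
  Num.max 0 a ^+ 2 <= t * Num.max 0 a1 ^+ 2 + (1 - t) * Num.max 0 b1 ^+ 2.
Proof.
move=> /andP[t0 t1] ha.
set A := Num.max 0 a1; set B := Num.max 0 b1; set c := Num.max 0 a.
have A0 : 0 <= A by rewrite le_max lexx.
have B0 : 0 <= B by rewrite le_max lexx.
have Aa : a1 <= A by rewrite le_max lexx orbT.
have Bb : b1 <= B by rewrite le_max lexx orbT.
have c0 : 0 <= c by rewrite le_max lexx.
have cle : c <= t * A + (1 - t) * B.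
  rewrite ge_max; apply/andP; split; first by nra.
  by apply: (le_trans ha); nra.
set d := t * A + (1 - t) * B in cle.
have h1 : c ^+ 2 <= d ^+ 2 by rewrite ler_sqr ?nnegrE //; nra.
have h2 : 0 <= t * (1 - t) * (A - B) ^+ 2.
  by rewrite mulr_ge0 ?sqr_ge0 ?mulr_ge0 ?subr_ge0.
apply: (le_trans h1); rewrite /d; nra.
Qed.

Theorem theorem4p4 (R : realType) (N : nat) (n_ p_ : 'I_N -> nat) (m : nat)
  (g : 'cV[R]_(\sum_(nu < N) n_ nu) -> 'cV[R]_m)
  (h : forall nu : 'I_N, 'cV[R]_(n_ nu) -> 'cV[R]_(p_ nu))
  (xb : 'cV[R]_(\sum_(nu < N) n_ nu)) :
  C1 g -> convex_components g ->
  (forall nu, C1 (h nu)) -> (forall nu, convex_components (h nu)) ->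
  (exists x, gnep_feasible g h x) ->
  feas_kkt g h xb ->
  forall i : 'I_m, g xb i ord0 <= 0.
Proof.
move=> Cg cvg_g Ch cvh [y [gy hy]] kkt i.
set phi := fun x => sqnorm (vplus (g x)).
have phiE x : phi x = \sum_k Num.max 0 (g x k ord0) ^+ 2.
  by rewrite /phi /sqnorm; apply: eq_bigr => k _; rewrite mxE.
have phiy : phi y = 0.
  by rewrite phiE big1 // => k _; rewrite (max_l (gy k)) expr2 mul0r.
have cphi : convex_fun phi.
  move=> x1 x2 t t01; rewrite !phiE !mulr_sumr -big_split; apply: ler_sum => k _.
  by apply: s_cvx => //; exact: (cvg_g k x1 x2 t t01).
have dphi : differentiable phi xb.
  have -> : phi = \sum_(k < m) (fun x => Num.max 0 (g x k ord0) ^+ 2).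
    by rewrite fct_sumE; apply/funext => x; rewrite phiE.
  apply: differentiable_sum => k.
  apply: (differentiable_comp (g := fun u : R => Num.max 0 u ^+ 2)
            (f := fun x => g x k ord0)); last exact: s_diff.
  exact: (differentiable_comp (f := g) (g := fun M : 'cV[R]_m => M k ord0))
           (Cg.1 xb) (differentiable_coord _ _ _).
have key := @cvx_diff_le _ _ phi xb y cphi dphi.
have dge0 : 0 <= 'd phi xb (y - xb).
  rewrite d_lin.
  have -> : \sum_i (y - xb) i ord0 * 'd phi xb (delta_mx i ord0)
      = \sum_k (grad phi xb) k ord0 * (y - xb) k ord0.
    by apply: eq_bigr => k _; rewrite [grad _ _ _ _]mxE mulrC.
  rewrite blk_dot; apply: sumr_ge0 => nu _.
  have [w [Hw Hc]] := kkt nu.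
  have Gnu : blk (grad phi xb) nu = - (tjac (h nu) (blk xb nu) *m w).
    by rewrite -[RHS]sub0r -Hw addrK.
  rewrite Gnu.
  have bd : blk (y - xb) nu = blk y nu - blk xb nu by rewrite /blk submxcolB.
  rewrite bd.
  set x := blk xb nu; set z := blk y nu.
  have -> : \sum_i (- (tjac (h nu) x *m w)) i ord0 * (z - x) i ord0
     = - \sum_j w j ord0 * 'd (fun u => h nu u j ord0) x (z - x).
    rewrite (eq_bigr (fun i0 => - \sum_j (w j ord0 * ((z - x) i0 ord0 *
         'd (fun u => h nu u j ord0) x (delta_mx i0 ord0))))); last first.
      move=> i0 _; rewrite !mxE mulNr mulr_suml; congr (- _).
      by apply: eq_bigr => j _; rewrite /tjac !mxE; ring.
    rewrite sumrN exchange_big /=; congr (- _); apply: eq_bigr => j _.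
    by rewrite d_lin mulr_sumr.
  rewrite oppr_ge0; apply: sumr_le0 => j _.
  have [wj hw] := @min0 _ _ _ (Hc j).
  move: hw; rewrite !mxE => hw.
  have dh : differentiable (fun u => h nu u j ord0) x.
    exact: (differentiable_comp (f := h nu) (g := fun M : 'cV[R]_(p_ nu) => M j ord0))
           ((Ch nu).1 x) (differentiable_coord _ _ _).
  have cv := @cvx_diff_le _ _ _ x z (cvh nu j) dh.
  have hz := hy nu j.
  rewrite -/z in hz.
  nra.
have phx0 : phi xb = 0.
  apply/eqP; rewrite eq_le; apply/andP; split; last first.
    by rewrite phiE sumr_ge0 // => k _; exact: sqr_ge0.
  by move: key; rewrite phiy; lra.
move: phx0; rewrite phiE => /eqP; rewrite psumr_eq0 => [/allP /(_ i)|k _]; last exact: sqr_ge0.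
rewrite mem_index_enum => /(_ isT) /eqP /eqP; rewrite sqrf_eq0 => /eqP e.
by rewrite -e le_max lexx orbT.
Qed.
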